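(* Let $\alpha=(x,u')$ and $\beta=(y,v')$ be distinct non-collinear points of $\mathcal{S}$ such that either ($x=y$ and $u'\neq v'$) or ($x\neq y$ and $u'=v'$). Then $|\{\alpha,\beta\}^{\perp}|\geq 2$ in $\mathcal{S}$.
   Context: Let $S=(P,L)$ and $S'=(P',L')$ be generalized quadrangles of order $(2,2)$ (every line has 3 points, every point lies on 3 lines, and for each point $x$ and line $l\not\ni x$ exactly one point of $l$ is collinear with $x$), with an isomorphism $x\mapsto x'$ from $S$ to $S'$. In a point-line geometry, $x^{\perp}$ is $x$ together with all points collinear with $x$, and $A^{\perp}=\bigcap_{a\in A}a^{\perp}$. A triad is a set of three pairwise non-collinear points, complete if $|T^{\perp}|=3$. The geometry $\mathcal{S}=(\mathcal{P},\mathcal{L})$ has point set $\mathcal{P}=\{(x,y')\in P\times P':y'\in x'^{\perp}\}$ and lines all $3$-subsets $\{(x,u'),(y,v'),(z,w')\}$ of $\mathcal{P}$ where $T=\{x,y,z\}$ (three distinct points) is a line or a complete triad of $S$ and $\{u',v',w'\}=T'^{\perp}$ in $S'$ with $u',v',w'$ distinct. *)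

(* Defs.v *)
From mathcomp Require Import all_boot.
Set Implicit Arguments. Unset Strict Implicit. Unset Printing Implicit Defensive.

Section Geometry.
Variable T : finType.

Definition collinear (Ls : {set {set T}}) (x y : T) : bool :=
  [exists l in Ls, (x \in l) && (y \in l)].

Definition perp (Pts : {set T}) (Ls : {set {set T}}) (x : T) : {set T} :=
  [set y in Pts | (y == x) || collinear Ls x y].

Definition perpS (Pts : {set T}) (Ls : {set {set T}}) (A : {set T}) : {set T} :=
  [set y in Pts | [forall a in A, y \in perp Pts Ls a]].

Definition is_GQ22 (Ls : {set {set T}}) : Prop :=
  [/\ (forall l, l \in Ls -> #|l| = 3),
      (forall x : T, #|[set l in Ls | x \in l]| = 3),
      (forall x y : T, x != y -> #|[set l in Ls | (x \in l) && (y \in l)]| <= 1)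
    & (forall (x : T) l, l \in Ls -> x \notin l ->
         #|[set y in l | collinear Ls x y]| = 1)].

Definition is_triad (Ls : {set {set T}}) (Tr : {set T}) : bool :=
  (#|Tr| == 3) &&
  [forall a in Tr, forall b in Tr, (a != b) ==> ~~ collinear Ls a b].

Definition complete_triad (Ls : {set {set T}}) (Tr : {set T}) : bool :=
  is_triad Ls Tr && (#|perpS setT Ls Tr| == 3).
End Geometry.

Section Construction.
Variables (P P' : finType) (L : {set {set P}}) (L' : {set {set P'}}) (f : P -> P').

Definition is_iso : Prop :=
  bijective f /\ (forall l : {set P}, (l \in L) = (f @: l \in L')).

(* point set of the new geometry: pairs (x,y') with y' in x'^perp *)
Definition SPts : {set P * P'} :=
  [set p : P * P' | p.2 \in perp setT L' (f p.1)].

Definition SLines : {set {set P * P'}} :=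
  [set A : {set P * P'} | [exists x : P, exists y : P, exists z : P,
     exists u : P', exists v : P', exists w : P',
       [&& A == [set (x, u); (y, v); (z, w)],
           A \subset SPts,
           [&& x != y, y != z & x != z],
           ([set x; y; z] \in L) || complete_triad L [set x; y; z],
           [set u; v; w] == perpS setT L' (f @: [set x; y; z])
         & [&& u != v, v != w & u != w]]]].
End Construction.

(* Main.v *)
Require Import Defs.
From mathcomp Require Import all_boot.
Set Implicit Arguments. Unset Strict Implicit. Unset Printing Implicit Defensive.

Section GQ.
Variable T : finType.
Variable L : {set {set T}}.
Hypothesis HL : is_GQ22 L.

Local Notation col := (collinear L).

Lemma colP x y : reflect (exists2 l, l \in L & (x \in l) && (y \in l)) (col x y).
Proof.
apply: (iffP existsP) => -[l].
  by case/andP => Hl H; exists l.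
by move=> Hl H; exists l; rewrite Hl.
Qed.

Lemma col_sym x y : col x y = col y x.
Proof. by apply/colP/colP => -[l H /andP[]]; exists l => //; apply/andP. Qed.

Lemma col_line l x y : l \in L -> x \in l -> y \in l -> col x y.
Proof. by move=> Hl Hxl Hyl; apply/colP; exists l; rewrite ?Hxl ?Hyl. Qed.

Lemma col_refl x : col x x.
Proof.
case: HL => _ H2 _ _.
have : 0 < #|[set l in L | x \in l]| by rewrite H2.
case/card_gt0P => l; rewrite inE => /andP[Hl Hx].
exact: (col_line Hl Hx Hx).
Qed.

Lemma ncol_neq x y : ~~ col x y -> x != y.
Proof. by apply: contra => /eqP->; apply: col_refl. Qed.

Lemma perpE x y : (y \in perp setT L x) = col x y.
Proof. rewrite !inE /=; case: eqP => //= ->; by rewrite col_refl. Qed.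

Lemma perpSE (A : {set T}) y : (y \in perpS setT L A) = [forall a in A, col a y].
Proof.
rewrite /perpS !inE /=; apply/forall_inP/forall_inP => H a Ha; move: (H a Ha); by rewrite perpE.
Qed.

Lemma uniq_line x y l m : x != y -> l \in L -> m \in L ->
  x \in l -> y \in l -> x \in m -> y \in m -> l = m.
Proof.
case: HL => _ _ H3 _ nxy Hl Hm xl yl xm ym.
have := H3 x y nxy.
apply: contraTeq => nlm.
rewrite -ltnNge.
apply/card_gt1P; exists l, m; by rewrite !inE Hl Hm xl yl xm ym.
Qed.

Lemma gq_ex x l : l \in L -> x \notin l -> exists2 y, y \in l & col x y.
Proof.
case: HL => _ _ _ H4 Hl xl.
have : 0 < #|[set y in l | col x y]| by rewrite H4.
case/card_gt0P => y; rewrite inE => /andP[]; by exists y.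
Qed.

Lemma gq_uniq x l y z : l \in L -> x \notin l -> y \in l -> z \in l -> col x y -> col x z -> y = z.
Proof.
case: HL => _ _ _ H4 Hl xl yl zl cy cz.
have /cards1P[w Hw] : #|[set y in l | col x y]| == 1 by rewrite H4.
have : y \in [set y in l | col x y] by rewrite inE yl cy.
have : z \in [set y in l | col x y] by rewrite inE zl cz.
by rewrite Hw !inE => /eqP-> /eqP->.
Qed.

Lemma line_size l : l \in L -> #|l| = 3.
Proof. by case: HL => H1 _ _ _; apply: H1. Qed.

Lemma triangle x y z : x != y -> col x y -> col y z -> col x z ->
  exists2 l, l \in L & [&& x \in l, y \in l & z \in l].
Proof.
move=> nxy cxy cyz cxz.
case/colP: cxy => l Hl /andP[xl yl].
exists l => //; rewrite xl yl /=.
apply/negPn/negP => zl.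
have cxz' : col z x by rewrite col_sym.
have cyz' : col z y by rewrite col_sym.
by have /eqP := gq_uniq Hl zl xl yl cxz' cyz'; rewrite (negbTE nxy).
Qed.

Lemma perpS_line m : m \in L -> perpS setT L m = m.
Proof.
move=> Hm; apply/setP => y; rewrite perpSE.
apply/forall_inP/idP => [H|ym a am]; last exact: col_line Hm am ym.
apply/negPn/negP => ym.
case: HL => _ _ _ H4.
have := H4 y m Hm ym.
have -> : [set z in m | col y z] = m.
  by apply/setP => z; rewrite inE; case zm: (z \in m) => //=; rewrite col_sym H.
by rewrite line_size.
Qed.

Lemma card3 (a b c : T) : uniq [:: a; b; c] -> #|[set a; b; c]| = 3.
Proof.
move=> /card_uniqP H; rewrite -[3]/(size [:: a; b; c]) -H.
apply: eq_card => z; rewrite !inE; by case: (z == a); case: (z == b).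
Qed.

Lemma line_eq3 m a b c : m \in L -> a \in m -> b \in m -> c \in m ->
  uniq [:: a; b; c] -> m = [set a; b; c].
Proof.
move=> Hm am bm cm u.
apply/eqP; rewrite eq_sym eqEcard line_size // .
rewrite card3 //.
rewrite leqnn andbT; apply/subsetP => z; rewrite !inE.
by move=> /orP[/orP[]|] /eqP->.
Qed.


Lemma card_seq (U : finType) (s : seq U) : uniq s -> #|[set x in s]| = size s.
Proof. move=> /card_uniqP H; rewrite -H; apply: eq_card => z; by rewrite inE. Qed.

Lemma card3_ex2 (A : {set T}) a b : #|A| = 3 -> a \in A -> b \in A -> a != b ->
  exists c, uniq [:: a; b; c] /\ A = [set a; b; c].
Proof.
move=> HA aA bA nab.
have : #|A :\ a :\ b| == 1.
  by move: HA; rewrite (cardsD1 a) aA (cardsD1 b) !inE eq_sym nab bA; case: #|_| => [|[|[|n]]] //.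
case/cards1P => c Hc.
have : c \in A :\ a :\ b by rewrite Hc inE.
rewrite !inE => /and3P[ncb nca cA].
exists c; split; first by rewrite /= !inE negb_or nab eq_sym nca eq_sym ncb.
apply/eqP; rewrite eq_sym eqEcard HA card3; last by rewrite /= !inE negb_or nab eq_sym nca eq_sym ncb.
rewrite leqnn andbT; apply/subsetP => z; rewrite !inE.
by move=> /orP[/orP[]|] /eqP->.
Qed.

Lemma card3_ex (A : {set T}) c : #|A| = 3 -> c \in A ->
  exists c1 c2, uniq [:: c; c1; c2] /\ A = [set c; c1; c2].
Proof.
move=> HA cA.
have : 1 < #|A :\ c| by move: HA; rewrite (cardsD1 c) cA; case: #|_| => [|[|[|n]]] //.
case/card_gt1P => c1 [c1' []]; rewrite !inE => /andP[nc1 c1A] _ _.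
have nc1' : c != c1 by rewrite eq_sym.
have [c2 [u E]] := card3_ex2 HA cA c1A nc1'.
by exists c1, c2.
Qed.

Lemma forall3 (P : pred T) a b d :
  [forall z in [set a; b; d], P z] = [&& P a, P b & P d].
Proof.
apply/forall_inP/and3P => [H|[Ha Hb Hd] z]; first by split; apply: H; rewrite !inE eqxx ?orbT.
by rewrite !inE => /orP[/orP[]|] /eqP->.
Qed.

Lemma perp2card p q : ~~ col p q -> #|[set r | col p r && col q r]| = 3.
Proof.
move=> npq.
case: HL => _ H2 _ _.
set Lp := [set l in L | p \in l].
pose phi (l : {set T}) := odflt p [pick r in l | col q r].
have qnl l : l \in L -> p \in l -> q \notin l.
  by move=> Hl pl; apply/negP => ql; move: npq; rewrite (col_line Hl pl ql).
have phiP l : l \in Lp -> phi l \in l /\ col q (phi l).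
  rewrite inE => /andP[Hl pl].
  rewrite /phi; case: pickP => [r /andP[rl cr]|H] //=.
  case: (gq_ex Hl (qnl l Hl pl)) => r rl cr; by move: (H r); rewrite rl cr.
have -> : [set r | col p r && col q r] = phi @: Lp.
  apply/setP => r; rewrite inE; apply/andP/imsetP.
  - case => cpr cqr; case/colP: cpr => l Hl /andP[pl rl].
    have lLp : l \in Lp by rewrite inE Hl pl.
    exists l => //.
    have [H1 H3] := phiP l lLp.
    exact: (gq_uniq Hl (qnl l Hl pl) rl H1 cqr H3).
  - case => l Hl ->; have [H1 H3] := phiP l Hl; move: Hl; rewrite inE => /andP[Hl pl].
    split; [exact: (col_line Hl pl H1) | exact H3].
rewrite card_in_imset ?H2 //.
move=> l m Hl Hm E.
have [l1 l2] := phiP l Hl; have [m1 m2] := phiP m Hm.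
rewrite E in l1 l2.
have npm : p != phi m.
  by apply/negP => /eqP pm; move: npq; rewrite pm col_sym m2.
move: Hl Hm; rewrite !inE => /andP[Hl pl] /andP[Hm pm].
exact: (uniq_line npm Hl Hm pl l1 pm m1).
Qed.

Lemma perp_noncol a b r s : ~~ col a b -> col a r -> col b r -> col a s -> col b s ->
  r != s -> ~~ col r s.
Proof.
move=> nab car cbr cas cbs nrs; apply/negP => crs.
have nar : a != r by apply/negP => /eqP ar; move: nab; rewrite ar col_sym cbr.
have nbr : b != r by apply/negP => /eqP br; move: nab; rewrite br car.
have [n Hn /and3P[an rn sn]] := triangle nar car crs cas.
have [n' Hn' /and3P[bn' rn' sn']] := triangle nbr cbr crs cbs.
have E := uniq_line nrs Hn Hn' rn sn rn' sn'.
rewrite -E in bn'.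
by move: nab; rewrite (col_line Hn an bn').
Qed.

Lemma notcol3 p q s t m : m \in L -> p \in m -> s \in m -> t \in m -> p != t ->
  col p q -> ~~ col q s -> ~~ col q t.
Proof.
move=> Hm pm sm tm npt cpq nqs; apply/negP => cqt.
have npq : p != q by apply/negP => /eqP pq; move: nqs; rewrite -pq (col_line Hm pm sm).
have [n Hn /and3P[pn qn tn]] := triangle npq cpq cqt (col_line Hm pm tm).
have E := uniq_line npt Hn Hm pn tn pm tm.
rewrite E in qn.
by move: nqs; rewrite (col_line Hm qn sm).
Qed.

Lemma regular a b c c1 c2 d : ~~ col a b ->
  col a c -> col b c -> col a c1 -> col b c1 -> col a c2 -> col b c2 ->
  uniq [:: c; c1; c2] -> col c d -> col c1 d -> d != a -> d != b -> col c2 d.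
Proof.
move=> nab ac bc ac1 bc1 ac2 bc2 u cd c1d nda ndb.
move: u; rewrite /= !inE negb_or => /andP[/andP[ncc1 ncc2] /andP[nc1c2 _]].
have Ncc1 : ~~ col c c1 := perp_noncol nab ac bc ac1 bc1 ncc1.
have Ncc2 : ~~ col c c2 := perp_noncol nab ac bc ac2 bc2 ncc2.
have Nc1c2 : ~~ col c1 c2 := perp_noncol nab ac1 bc1 ac2 bc2 nc1c2.
have Nda : ~~ col d a.
  by apply: (perp_noncol Ncc1) => //; rewrite col_sym.
have Ndb : ~~ col d b.
  by apply: (perp_noncol Ncc1) => //; rewrite col_sym.
case: (boolP (col c2 d)) => // nd2; rewrite col_sym in nd2.
case/colP: ac2 => ma Hma /andP[ama c2ma].
case/colP: bc2 => mb Hmb /andP[bmb c2mb].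
have dma : d \notin ma by apply/negP => dm; move: Nda; rewrite (col_line Hma dm ama).
have dmb : d \notin mb by apply/negP => dm; move: Ndb; rewrite (col_line Hmb dm bmb).
case: (gq_ex Hma dma) => a3 a3m da3.
case: (gq_ex Hmb dmb) => b3 b3m db3.
have naa3 : a != a3 by apply/negP => /eqP E; move: Nda; rewrite E da3.
have nbb3 : b != b3 by apply/negP => /eqP E; move: Ndb; rewrite E db3.
have nc2a3 : c2 != a3 by apply/negP => /eqP E; move: nd2; rewrite E da3.
have nc2b3 : c2 != b3 by apply/negP => /eqP E; move: nd2; rewrite E db3.
have N1 : ~~ col c a3 := notcol3 Hma ama c2ma a3m naa3 ac Ncc2.
have N2 : ~~ col c1 a3 := notcol3 Hma ama c2ma a3m naa3 ac1 Nc1c2.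
have N3 : ~~ col c b3 := notcol3 Hmb bmb c2mb b3m nbb3 bc Ncc2.
have N4 : ~~ col c1 b3 := notcol3 Hmb bmb c2mb b3m nbb3 bc1 Nc1c2.
have c2a : col c2 a by rewrite col_sym (col_line Hma ama c2ma).
have N5 : ~~ col a b3 := notcol3 Hmb c2mb bmb b3m nc2b3 c2a nab.
have c2b3 : col c2 b3 := col_line Hmb c2mb b3m.
have N5' : ~~ col b3 a by rewrite col_sym.
have N6 : ~~ col b3 a3 := notcol3 Hma c2ma ama a3m nc2a3 c2b3 N5'.
case/colP: cd => l1 Hl1 /andP[cl1 dl1].
case/colP: c1d => l2 Hl2 /andP[c1l2 dl2].
case/colP: da3 => l3 Hl3 /andP[dl3 a3l3].
case/colP: db3 => l4 Hl4 /andP[dl4 b3l4].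
have neq (l m : {set T}) x y : l \in L -> x \in l -> y \in m -> ~~ col x y -> l != m.
  by move=> Hl xl ym nxy; apply/negP => /eqP E; move: nxy; rewrite -E in ym; rewrite (col_line Hl xl ym).
have u : uniq [:: l1; l2; l3; l4].
  rewrite /= !inE !negb_or.
  rewrite (neq _ _ _ _ Hl1 cl1 c1l2 Ncc1) (neq _ _ _ _ Hl1 cl1 a3l3 N1) (neq _ _ _ _ Hl1 cl1 b3l4 N3).
  rewrite (neq _ _ _ _ Hl2 c1l2 a3l3 N2) (neq _ _ _ _ Hl2 c1l2 b3l4 N4).
  have N6' : ~~ col a3 b3 by rewrite col_sym.
  by rewrite (neq _ _ _ _ Hl3 a3l3 b3l4 N6').
have := card_seq u.
case: HL => _ H2 _ _.
have sub : [set x in [:: l1; l2; l3; l4]] \subset [set l in L | d \in l].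
  apply/subsetP => z; rewrite !inE => /or4P[] /eqP ->; by rewrite ?Hl1 ?Hl2 ?Hl3 ?Hl4 ?dl1 ?dl2 ?dl3 ?dl4.
have := subset_leq_card sub; rewrite H2 => H /= E; by move: H; rewrite E.
Qed.

Lemma regR a b c : ~~ col a b -> col a c -> col b c -> exists d c1 c2,
  [/\ uniq [:: a; b; d], uniq [:: c; c1; c2],
      [&& ~~ col a b, ~~ col b d & ~~ col a d],
      [&& ~~ col c c1, ~~ col c1 c2 & ~~ col c c2]
     & perpS setT L [set a; b; d] = [set c; c1; c2]
    /\ perpS setT L [set c; c1; c2] = [set a; b; d]].
Proof.
move=> nab ac bc.
have cC : c \in [set r | col a r && col b r] by rewrite inE ac bc.
have [c1 [c2 [uC EC]]] := card3_ex (perp2card nab) cC.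
have memC r : (r \in [set c; c1; c2]) = col a r && col b r by rewrite -EC inE.
have /andP[ac1 bc1] : col a c1 && col b c1 by rewrite -memC !inE eqxx ?orbT.
have /andP[ac2 bc2] : col a c2 && col b c2 by rewrite -memC !inE eqxx ?orbT.
have uC' := uC.
move: uC'; rewrite /= !inE negb_or => /andP[/andP[ncc1 ncc2] /andP[nc1c2 _]].
have Ncc1 : ~~ col c c1 := perp_noncol nab ac bc ac1 bc1 ncc1.
have Ncc2 : ~~ col c c2 := perp_noncol nab ac bc ac2 bc2 ncc2.
have Nc1c2 : ~~ col c1 c2 := perp_noncol nab ac1 bc1 ac2 bc2 nc1c2.
have aD : a \in [set r | col c r && col c1 r] by rewrite inE !(col_sym _ a) ac ac1.
have bD : b \in [set r | col c r && col c1 r] by rewrite inE !(col_sym _ b) bc bc1.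
have [d [uD ED]] := card3_ex2 (perp2card Ncc1) aD bD (ncol_neq nab).
have memD r : (r \in [set a; b; d]) = col c r && col c1 r by rewrite -ED inE.
have /andP[cd c1d] : col c d && col c1 d by rewrite -memD !inE eqxx ?orbT.
have uD' := uD.
move: uD'; rewrite /= !inE negb_or => /andP[/andP[nab' nad] /andP[nbd _]].
have c2d : col c2 d.
  apply: (regular nab ac bc ac1 bc1 ac2 bc2 uC cd c1d); by rewrite eq_sym.
have Nbd : ~~ col b d.
  apply: (perp_noncol Ncc1) => //; by rewrite col_sym.
have Nad : ~~ col a d.
  apply: (perp_noncol Ncc1) => //; by rewrite col_sym.
exists d, c1, c2; split => //; first by rewrite nab Nbd Nad.
  by rewrite Ncc1 Nc1c2 Ncc2.
split.
- apply/setP => y; rewrite perpSE forall3 memC.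
  apply/idP/idP => [/and3P[-> -> _] //|/andP[ay b_y]].
  rewrite ay b_y /=.
  have : y \in [set c; c1; c2] by rewrite memC ay b_y.
  rewrite !inE => /orP[/orP[]|] /eqP->; by rewrite col_sym.
- apply/setP => y; rewrite perpSE forall3 memD.
  apply/idP/idP => [/and3P[-> -> _] //|/andP[cy c1y]].
  rewrite cy c1y /=.
  have : y \in [set a; b; d] by rewrite memD cy c1y.
  rewrite !inE => /orP[/orP[]|] /eqP->; by rewrite ?c2d // col_sym.
Qed.

End GQ.

Ltac seteq := apply/setP => ?; rewrite !inE;
  repeat match goal with |- context [?t == ?a] => case: (t == a) end; done.

Section Main.
Variables (P P' : finType) (L : {set {set P}}) (L' : {set {set P'}}) (f : P -> P').
Hypotheses (HL : is_GQ22 L) (HL' : is_GQ22 L') (Hiso : is_iso L L' f).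

Local Notation col := (collinear L).
Local Notation col' := (collinear L').
Local Notation SP := (SPts L' f).
Local Notation SL := (SLines L L' f).

Lemma f_inj : injective f.
Proof. by case: Hiso => /bij_inj. Qed.

Lemma colT a b : col' (f a) (f b) = col a b.
Proof.
case: Hiso => -[g fK gK] HLf.
apply/colP/colP => -[l Hl /andP[al bl]].
- exists (g @: l).
    rewrite HLf -imset_comp (eq_imset _ gK) imset_id //.
  by rewrite -(fK a) -(fK b) !imset_f.
- exists (f @: l); first by rewrite -HLf.
  by rewrite !imset_f.
Qed.

Lemma perpST (A : {set P}) : perpS setT L' (f @: A) = f @: perpS setT L A.
Proof.
case: Hiso => -[g fK gK] HLf.
apply/setP => y'; rewrite -(gK y') (mem_imset _ _ f_inj) (perpSE HL') (perpSE HL).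
apply/forall_inP/forall_inP => H a Ha.
- by rewrite -colT; apply: H; rewrite imset_f.
- by case/imsetP: Ha => a0 Ha0 ->; rewrite colT; apply: H.
Qed.

Lemma SPtsE a b : ((a, f b) \in SP) = col a b.
Proof. by rewrite inE /= (perpE HL') colT. Qed.

Lemma uniq3 (p q r : P) : #|[set p; q; r]| = 3 -> uniq [:: p; q; r].
Proof.
move=> H; apply/card_uniqP; rewrite [size _]/= -H.
apply: eq_card => z; rewrite !inE; by case: (z == p); case: (z == q).
Qed.

Lemma mkL a b c p q r : uniq [:: a; b; c] -> uniq [:: p; q; r] ->
  ([set a; b; c] \in L) || complete_triad L [set a; b; c] ->
  [set p; q; r] = perpS setT L [set a; b; c] ->
  [set (a, f p); (b, f q); (c, f r)] \in SL.
Proof.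
move=> uabc upqr HT E.
have cP : forall z, z \in [set a; b; c] -> forall w, w \in [set p; q; r] -> col z w.
  move=> z zi w; rewrite E (perpSE HL) => /forall_inP; exact.
rewrite inE; apply/existsP; exists a; apply/existsP; exists b; apply/existsP; exists c.
apply/existsP; exists (f p); apply/existsP; exists (f q); apply/existsP; exists (f r).
rewrite eqxx /=.
move: uabc upqr; rewrite /= !inE !negb_or => /andP[/andP[nab nac] /andP[nbc _]] /andP[/andP[npq npr] /andP[nqr _]].
rewrite nab nac nbc HT !(inj_eq f_inj) npq npr nqr /= andbT.
apply/andP; split.
  apply/subsetP => z; rewrite !inE => /orP[/orP[]|] /eqP-> /=; rewrite colT; apply/orP; right; apply: cP; by rewrite !inE eqxx ?orbT.
by rewrite perpST -E !imsetU !imset_set1.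
Qed.

Lemma Lline a b c p q r : [set a; b; c] \in L -> uniq [:: a; b; c] ->
  [set p; q; r] = [set a; b; c] -> [set (a, f p); (b, f q); (c, f r)] \in SL.
Proof.
move=> Hm u E; apply: mkL => //.
- by apply: uniq3; rewrite E card3.
- by rewrite Hm.
- by rewrite (perpS_line HL Hm).
Qed.

Lemma Tline a b c p q r p0 q0 r0 : [&& ~~ col a b, ~~ col b c & ~~ col a c] ->
  perpS setT L [set a; b; c] = [set p0; q0; r0] -> uniq [:: p0; q0; r0] ->
  [set p; q; r] = [set p0; q0; r0] -> [set (a, f p); (b, f q); (c, f r)] \in SL.
Proof.
move=> /and3P[nab nbc nac] E u0 E2.
have u : uniq [:: a; b; c].
  by rewrite /= !inE !negb_or !(ncol_neq HL) .
apply: mkL => //.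
- by apply: uniq3; rewrite E2 card3.
- apply/orP; right; rewrite /complete_triad /is_triad card3 // E card3 // !eqxx /= andbT.
  apply/forall_inP => a1 Ha1; apply/forall_inP => b1 Hb1; apply/implyP => nab1.
  move: Ha1 Hb1 nab1; rewrite !inE => /orP[/orP[]|] /eqP-> /orP[/orP[]|] /eqP->;
    rewrite ?eqxx // => _; by rewrite // col_sym.
- by rewrite E E2.
Qed.

Lemma SL_sub l : l \in SL -> l \subset SP.
Proof.
rewrite inE => /existsP[? /existsP[? /existsP[? /existsP[? /existsP[? /existsP[? /andP[_ /andP[H _]]]]]]]].
exact: H.
Qed.

Lemma common al be ga l1 l2 : l1 \in SL -> l2 \in SL ->
  al \in l1 -> ga \in l1 -> be \in l2 -> ga \in l2 ->
  ga \in perp SP SL al :&: perp SP SL be.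
Proof.
move=> H1 H2 a1 g1 b2 g2.
have gS := subsetP (SL_sub H1) _ g1.
move: gS; rewrite in_setI /perp !in_set => -> /=.
apply/andP; split; apply/orP; right; apply/existsP.
  by exists l1; rewrite H1 a1 g1.
by exists l2; rewrite H2 b2 g2.
Qed.

Lemma two (A : {set P * P'}) g1 g2 : g1 != g2 -> g1 \in A -> g2 \in A -> 2 <= #|A|.
Proof. by move=> n H1 H2; apply/card_gt1P; exists g1, g2. Qed.

Ltac finL Hm u := first [by rewrite !inE ?eqxx ?orbT | apply: (Lline Hm u); seteq].
Ltac finT N E u := first [by rewrite !inE ?eqxx ?orbT | apply: (Tline N E u); seteq].

Lemma caseA x u0 v0 : col x u0 -> col x v0 -> u0 != v0 -> u0 != x ->
  2 <= #|perp SP SL (x, f u0) :&: perp SP SL (x, f v0)|.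
Proof.
move=> Ha Hb nuv nux.
have finj := f_inj.
case: (eqVneq v0 x) => [Ev | nvx].
- subst v0.
  case/colP: Ha => m Hm /andP[xm um].
  have nxu : x != u0 by rewrite eq_sym.
  have [z [u Em]] := card3_ex2 (line_size HL Hm) xm um nxu.
  rewrite Em in Hm.
  have u' := u; move: u'; rewrite /= !inE !negb_or => /andP[/andP[_ nxz] /andP[nuz _]].
  apply: (two (g1 := (z, f z)) (g2 := (u0, f z))).
  + by rewrite xpair_eqE eq_sym (negbTE nuz).
  + apply: (common (l1 := [set (x, f u0); (u0, f x); (z, f z)]) (l2 := [set (x, f x); (u0, f u0); (z, f z)])); finL Hm u.
  + apply: (common (l1 := [set (x, f u0); (u0, f z); (z, f x)]) (l2 := [set (x, f x); (u0, f z); (z, f u0)])); finL Hm u.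
case: (boolP (col u0 v0)) => [cuv | ncuv].
- have nxu : x != u0 by rewrite eq_sym.
  have [n Hn /and3P[xn un vn]] := triangle HL nxu Ha cuv Hb.
  have u : uniq [:: x; u0; v0] by rewrite /= !inE !negb_or nxu eq_sym nvx nuv.
  have Hm := Hn; rewrite (line_eq3 HL Hn xn un vn u) in Hm.
  apply: (two (g1 := (u0, f x)) (g2 := (v0, f x))).
  + by rewrite xpair_eqE (negbTE nuv).
  + apply: (common (l1 := [set (x, f u0); (u0, f x); (v0, f v0)]) (l2 := [set (x, f v0); (u0, f x); (v0, f u0)])); finL Hm u.
  + apply: (common (l1 := [set (x, f u0); (u0, f v0); (v0, f x)]) (l2 := [set (x, f v0); (u0, f u0); (v0, f x)])); finL Hm u.
- have Hu : col u0 x by rewrite col_sym.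
  have Hv : col v0 x by rewrite col_sym.
  have [d [c1 [c2 [uD uC ND NC [E1 E2]]]]] := regR HL ncuv Hu Hv.
  have uC' := uC; move: uC'; rewrite /= !inE !negb_or => /andP[/andP[_ _] /andP[nc12 _]].
  apply: (two (g1 := (c1, f d)) (g2 := (c2, f d))).
  + by rewrite xpair_eqE (negbTE nc12).
  + apply: (common (l1 := [set (x, f u0); (c1, f d); (c2, f v0)]) (l2 := [set (x, f v0); (c1, f d); (c2, f u0)])); finT NC E2 uD.
  + apply: (common (l1 := [set (x, f u0); (c1, f v0); (c2, f d)]) (l2 := [set (x, f v0); (c1, f u0); (c2, f d)])); finT NC E2 uD.
Qed.

End Main.

Ltac finL2 HL HL' Hiso Hm u := first [by rewrite !inE ?eqxx ?orbT | apply: (Lline HL HL' Hiso Hm u); seteq].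
Ltac finT2 HL HL' Hiso N E u := first [by rewrite !inE ?eqxx ?orbT | apply: (Tline HL HL' Hiso N E u); seteq].

Theorem lemma3p1 (P P' : finType) (L : {set {set P}}) (L' : {set {set P'}})
  (f : P -> P') :
  is_GQ22 L -> is_GQ22 L' -> is_iso L L' f ->
  forall (x y : P) (u v : P'),
  let alpha := (x, u) in let beta := (y, v) in
  alpha \in SPts L' f -> beta \in SPts L' f ->
  alpha != beta -> ~~ collinear (SLines L L' f) alpha beta ->
  (x = y /\ u <> v) \/ (x <> y /\ u = v) ->
  2 <= #|perp (SPts L' f) (SLines L L' f) alpha :&:
         perp (SPts L' f) (SLines L L' f) beta|.
Proof.
move=> HL HL' Hiso x y u v; cbv zeta.
case: (Hiso) => -[g fK gK] _.
rewrite -(gK u) -(gK v).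
move: (g u) (g v) => u0 v0; clear u v.
rewrite !(SPtsE HL' Hiso).
move=> Ha Hb _ _ H.
have finj := f_inj Hiso.
case: H => [[Exy Euv] | [nxy Euv]].
- subst y.
  have nuv : u0 != v0 by apply/eqP => E; apply: Euv; rewrite E.
  case: (eqVneq u0 x) => [Eu | nux].
  + subst u0; rewrite setIC; apply: (caseA HL HL' Hiso) => //; by rewrite eq_sym.
  + exact: (caseA HL HL' Hiso).
have Eu := finj _ _ Euv; subst v0.
have nxy' : x != y by apply/eqP.
case: (boolP (collinear L x y)) => [cxy | ncxy].
- case/colP: (cxy) => m Hm /andP[xm ym].
  have [z [u Em]] := card3_ex2 (line_size HL Hm) xm ym nxy'.
  have u0m : u0 \in m.
    case: (eqVneq u0 x) => [->//|nux]; case: (eqVneq u0 y) => [->//|nuy].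
    have [n Hn /and3P[xn yn un]] := triangle HL nxy' cxy Hb Ha.
    by rewrite -(uniq_line HL nxy' Hn Hm xn yn xm ym).
  rewrite Em in u0m Hm.
  have u' := u; move: u'; rewrite /= !inE !negb_or => /andP[/andP[_ nxz] /andP[nyz _]].
  move: u0m; rewrite !inE => /orP[/orP[]|] /eqP->.
  + apply: (two (g1 := (z, f z)) (g2 := (z, f y))).
    * by rewrite xpair_eqE (inj_eq finj) eq_sym (negbTE nyz) andbF.
    * apply: (common (l1 := [set (x, f x); (y, f y); (z, f z)]) (l2 := [set (x, f y); (y, f x); (z, f z)])); finL2 HL HL' Hiso Hm u.
    * apply: (common (l1 := [set (x, f x); (y, f z); (z, f y)]) (l2 := [set (x, f z); (y, f x); (z, f y)])); finL2 HL HL' Hiso Hm u.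
  + apply: (two (g1 := (z, f z)) (g2 := (z, f x))).
    * by rewrite xpair_eqE (inj_eq finj) eq_sym (negbTE nxz) andbF.
    * apply: (common (l1 := [set (x, f y); (y, f x); (z, f z)]) (l2 := [set (x, f x); (y, f y); (z, f z)])); finL2 HL HL' Hiso Hm u.
    * apply: (common (l1 := [set (x, f y); (y, f z); (z, f x)]) (l2 := [set (x, f z); (y, f y); (z, f x)])); finL2 HL HL' Hiso Hm u.
  + apply: (two (g1 := (z, f y)) (g2 := (z, f x))).
    * by rewrite xpair_eqE (inj_eq finj) eq_sym (negbTE nxy') andbF.
    * apply: (common (l1 := [set (x, f z); (y, f x); (z, f y)]) (l2 := [set (x, f x); (y, f z); (z, f y)])); finL2 HL HL' Hiso Hm u.
    * apply: (common (l1 := [set (x, f z); (y, f y); (z, f x)]) (l2 := [set (x, f y); (y, f z); (z, f x)])); finL2 HL HL' Hiso Hm u.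
- have [d [c1 [c2 [uD uC ND NC [E1 E2]]]]] := regR HL ncxy Ha Hb.
  have uC' := uC; move: uC'; rewrite /= !inE !negb_or => /andP[/andP[_ _] /andP[nc12 _]].
  apply: (two (g1 := (d, f c1)) (g2 := (d, f c2))).
  + by rewrite xpair_eqE (inj_eq finj) (negbTE nc12) andbF.
  + apply: (common (l1 := [set (x, f u0); (y, f c2); (d, f c1)]) (l2 := [set (x, f c2); (y, f u0); (d, f c1)])); finT2 HL HL' Hiso ND E1 uC.
  + apply: (common (l1 := [set (x, f u0); (y, f c1); (d, f c2)]) (l2 := [set (x, f c1); (y, f u0); (d, f c2)])); finT2 HL HL' Hiso ND E1 uC.
Qed.
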